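(* Let $f:\mathbb{Z}^n\to\mathbb{R}\cup\{+\infty\}$ be a function satisfying condition (SSQM$^\natural$). A vector $x^*\in\mathrm{dom}\,f$ is a minimizer of $f$ if and only if $$f(x^*-\chi_i+\chi_j)\ge f(x^* )\qquad\text{for all } i,j\in N\cup\{0\}.$$
   Context: $N=\{1,\dots,n\}$. For $i\in N$, $\chi_i\in\{0,1\}^n$ is the characteristic vector of $i$, and $\chi_0=0$. $\mathrm{dom}\,f=\{x\in\mathbb{Z}^n\mid f(x)<+\infty\}$. For $x,y\in\mathbb{Z}^n$, $\mathrm{supp}^+(x-y)=\{i\in N\mid x(i)>y(i)\}$ and $\mathrm{supp}^-(x-y)=\{j\in N\mid x(j)<y(j)\}$. Condition (SSQM$^\natural$): for all $x,y\in\mathrm{dom}\,f$ and all $i\in\mathrm{supp}^+(x-y)$ there exists $j\in\mathrm{supp}^-(x-y)\cup\{0\}$ such that at least one of the following holds: (a) $f(x-\chi_i+\chi_j)<f(x)$; (b) $f(y+\chi_i-\chi_j)<f(y)$; (c) $f(x-\chi_i+\chi_j)=f(x)$ and $f(y+\chi_i-\chi_j)=f(y)$. A function satisfying (SSQM$^\natural$) is called semi-strictly quasi M$^\natural$-convex. *)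

(* Defs.v *)
(* values in extended reals \bar R (R : realType), with
   the explicit hypothesis that f never takes the value -oo, so that f maps
   into R ∪ {+oo}.  Vectors of Z^n are functions 'I_n -> int. *)
From mathcomp Require Import all_boot all_order all_algebra.
From mathcomp Require Import reals constructive_ereal.
Set Implicit Arguments. Unset Strict Implicit. Unset Printing Implicit Defensive.
Import Order.TTheory GRing.Theory Num.Theory.
Local Open Scope ring_scope.

Definition zvec (n : nat) := 'I_n -> int.

(* characteristic vector chi_j for j in N ∪ {0}; None encodes 0 (chi_0 = 0) *)
Definition chi (n : nat) (j : option 'I_n) : zvec n :=
  fun k => if j == Some k then 1 else 0.

Definition shift (n : nat) (x : zvec n) (i j : option 'I_n) : zvec n :=
  fun k => x k - chi i k + chi j k.

Local Open Scope ereal_scope.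

Definition in_dom (R : realType) (n : nat) (f : zvec n -> \bar R) (x : zvec n) :
  Prop := f x < +oo.

Definition SSQM (R : realType) (n : nat) (f : zvec n -> \bar R) : Prop :=
  forall x y : zvec n, in_dom f x -> in_dom f y ->
  forall i : 'I_n, (y i < x i)%R ->
  exists j : option 'I_n,
    (match j with None => True | Some j' => (x j' < y j')%R end) /\
    [\/ f (shift x (Some i) j) < f x,
        f (shift y j (Some i)) < f y
      | f (shift x (Some i) j) = f x /\ f (shift y j (Some i)) = f y].

Definition minimizer (R : realType) (n : nat) (f : zvec n -> \bar R) (x : zvec n) :
  Prop := in_dom f x /\ forall y : zvec n, f x <= f y.

(* Main.v *)
Require Import Defs.
From mathcomp Require Import all_boot all_order all_algebra.
From mathcomp Require Import reals constructive_ereal.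
From mathcomp Require Import zify.
From Stdlib Require Import FunctionalExtensionality.
Set Implicit Arguments. Unset Strict Implicit. Unset Printing Implicit Defensive.
Import Order.TTheory GRing.Theory Num.Theory.
Local Open Scope ring_scope.

Definition dist (n : nat) (a b : zvec n) : nat := (\sum_(k < n) `|a k - b k|%N)%N.

Lemma sum_lt (n : nat) (F G : 'I_n -> nat) (i : 'I_n) :
  (forall k, F k <= G k)%N -> (F i < G i)%N -> (\sum_k F k < \sum_k G k)%N.
Proof.
move=> H Hi; rewrite (bigD1 i) // [X in (_ < X)%N](bigD1 i) //=.
by rewrite -addSn leq_add // leq_sum.
Qed.

Lemma eqSome (T : eqType) (x y : T) : (Some x == Some y) = (x == y).
Proof. by []. Qed.

Lemma dist_dec1 (n : nat) (a b : zvec n) (i : 'I_n) (j : option 'I_n) :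
  a i < b i -> (match j with None => True | Some j' => is_true (b j' < a j') end) ->
  (dist (shift a j (Some i)) b < dist a b)%N.
Proof.
move=> Hi Hj; apply: (sum_lt (i:=i)) => [k|]; rewrite /shift /chi.
- case: j Hj => [j'|] Hj /=; rewrite ?eqSome.
  + case: (eqVneq j' i) => [E|ne2]; first by subst; move: Hi Hj; lia.
    case: (eqVneq i k) => [E|ne]; case: (eqVneq j' k) => [E'|ne']; subst => //; lia.
  + case: (eqVneq i k) => [E|ne]; subst; lia.
- rewrite eqxx /=. case: j Hj => [j'|] Hj /=; last lia.
  rewrite eqSome.
  case: (eqVneq j' i) => [E|ne2]; first by subst; move: Hi Hj; lia.
  lia.
Qed.

Lemma dist_dec2 (n : nat) (a b : zvec n) (i : 'I_n) (j : option 'I_n) :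
  b i < a i -> (match j with None => True | Some j' => is_true (a j' < b j') end) ->
  (dist (shift a (Some i) j) b < dist a b)%N.
Proof.
move=> Hi Hj; apply: (sum_lt (i:=i)) => [k|]; rewrite /shift /chi.
- case: j Hj => [j'|] Hj /=; rewrite ?eqSome.
  + case: (eqVneq j' i) => [E|ne2]; first by subst; move: Hi Hj; lia.
    case: (eqVneq i k) => [E|ne]; case: (eqVneq j' k) => [E'|ne']; subst => //; lia.
  + case: (eqVneq i k) => [E|ne]; subst; lia.
- rewrite eqxx /=. case: j Hj => [j'|] Hj /=; last lia.
  rewrite eqSome.
  case: (eqVneq j' i) => [E|ne2]; first by subst; move: Hi Hj; lia.
  lia.
Qed.

Local Open Scope ereal_scope.

Lemma step (R : realType) (n : nat) (f : zvec n -> \bar R)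
  (hf : SSQM f) (xs : zvec n) (hxs : in_dom f xs)
  (Hloc : forall i j : option 'I_n, f xs <= f (shift xs i j)) (y : zvec n) :
  f y < f xs -> exists y', (dist y' xs < dist y xs)%N /\ f y' < f xs.
Proof.
move=> Hlt.
have hy : in_dom f y by rewrite /in_dom (lt_trans Hlt).
have [k Hk] : exists k, xs k != y k.
  case: (pickP (fun k => xs k != y k)) => [k Hk|H]; first by exists k.
  have E : y = xs.
    by apply: functional_extensionality => k; move: (H k) => /negbFE/eqP.
  by move: Hlt; rewrite E ltxx.
case: (ltgtP (y k) (xs k)) => [H|H|E]; last by rewrite E eqxx in Hk.
- have [j [Hj [Ha|Hb|[Hc1 Hc2]]]] := hf xs y hxs hy k H.
  + by have := Hloc (Some k) j; rewrite leNgt Ha.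
  + exists (shift y j (Some k)); split; first exact: dist_dec1.
    exact: lt_trans Hb Hlt.
  + exists (shift y j (Some k)); split; first exact: dist_dec1.
    by rewrite Hc2.
- have [j [Hj [Ha|Hb|[Hc1 Hc2]]]] := hf y xs hy hxs k H.
  + exists (shift y (Some k) j); split; first exact: dist_dec2.
    exact: lt_trans Ha Hlt.
  + by have := Hloc j (Some k); rewrite leNgt Hb.
  + exists (shift y (Some k) j); split; first exact: dist_dec2.
    by rewrite Hc1.
Qed.

Unset Implicit Arguments.
Theorem theorem2p3 (R : realType) (n : nat) (f : zvec n -> \bar R)
  (f_noninf : forall x, f x <> -oo)
  (hf : SSQM f) (xs : zvec n) (hxs : in_dom f xs) :
  minimizer f xs <->
  (forall i j : option 'I_n, f xs <= f (shift xs i j)).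
Proof.
split; first by move=> [_ H] i j; exact: H.
move=> Hloc; split => // y.
suff H : forall m y, (dist y xs <= m)%N -> f xs <= f y by exact: (H _ y (leqnn _)).
elim=> [|m IH] {}y Hd; rewrite leNgt; apply/negP => Hlt;
  have [y' [Hd' Hlt']] := step hf hxs Hloc Hlt.
- by move: (leq_trans Hd' Hd).
- by have := IH y' (leq_trans Hd' Hd); rewrite leNgt Hlt'.
Qed.
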